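(* Consider the algorithm (Algorithm 3 of the paper) which, for any noise-free protocol of transcript length $L$ and any unknown number $T$ of adversarial bit flips, succeeds with high probability and, when successful, sends $L' = L + O\left(\sqrt{L(T+1)\log L} + T\right)$ bits. If the adversary flips $T = O(L)$ bits and the noise rate is $\epsilon = T/L'$, then this algorithm achieves a communication rate $L/L'$ of at least $1-O\left(\sqrt{\frac{\log L}{L}} + \sqrt{\epsilon \log L}\right)$.
   Context: Setting: Alice and Bob simulate a two-party protocol with transcript length $L$ (known to both) over a synchronous binary channel on which an adversary, who does not see the transmitted bits or the parties' private randomness, flips $T$ bits in total, with $T$ unknown to the parties. $L'$ denotes the total number of bits sent by the simulating algorithm; the communication rate is $L/L'$ and the (effective) noise rate is $\epsilon = T/L'$. *)

(* Defs.v *)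
From Stdlib Require Import Reals.
Open Scope R_scope.

Definition rate (L L' : nat) : R := INR L / INR L'.
Definition noise_rate (T L' : nat) : R := INR T / INR L'.

Definition alg3_length_bound (C : R) (L T L' : nat) : Prop :=
  INR L' <= INR L + C * (sqrt (INR L * (INR T + 1) * ln (INR L)) + INR T).

(* Main.v *)
Require Import Defs.
From Stdlib Require Import Reals Lra Lia Psatz.
Open Scope R_scope.

Lemma sqrt_add_le (u v : R) : 0 <= u -> 0 <= v -> sqrt (u + v) <= sqrt u + sqrt v.
Proof.
  intros Hu Hv.
  pose proof (sqrt_pos u); pose proof (sqrt_pos v).
  rewrite <- (sqrt_square (sqrt u + sqrt v)) by lra.
  apply sqrt_le_1_alt.
  pose proof (sqrt_sqrt u Hu); pose proof (sqrt_sqrt v Hv).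
  nra.
Qed.

Lemma core (C k s q r w : R) :
  0 < C -> 0 <= k -> 0 < s -> 0 < q -> 1 <= r -> 0 <= w -> w <= k * s ->
  q * q <= s * s + C * (s * r + s * w * r + w * w) ->
  s * s / (q * q) >= 1 - C * (2 + k) * (r / s + w * r / q).
Proof.
  intros HC Hk Hs Hq Hr Hw Hws Hb.
  assert (Hq2 : 0 < q * q) by nra.
  destruct (Rle_lt_dec q s) as [Hqs | Hqs].
  - assert (s * s / (q * q) >= 1).
    { apply Rle_ge. apply (Rmult_le_reg_r (q*q)); auto.
      replace (s * s / (q * q) * (q * q)) with (s * s) by (field; apply Rgt_not_eq; lra). nra. }
    assert (0 <= C * (2 + k) * (r / s + w * r / q)).
    { apply Rmult_le_pos; [nra|].
      apply Rplus_le_le_0_compat; apply Rmult_le_pos;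
        try apply Rlt_le, Rinv_0_lt_compat; nra. }
    lra.
  -
    assert (Hss : s * s <= q * q) by nra.
    set (A := r / s). set (B := w * r / q).
    assert (HA : s * r <= q * q * A).
    { unfold A. apply (Rmult_le_reg_r s); auto.
      replace (q * q * (r / s) * s) with (q * q * r) by (field; apply Rgt_not_eq; lra).
      assert (0 <= (q*q - s*s) * r) by (apply Rmult_le_pos; lra). nra. }
    assert (HB1 : s * w * r <= q * q * B).
    { unfold B. apply (Rmult_le_reg_r q); auto.
      replace (q * q * (w * r / q) * q) with (q * q * w * r) by (field; apply Rgt_not_eq; lra).
      assert (0 <= (q - s) * (q * w * r)) by (apply Rmult_le_pos; [lra| apply Rmult_le_pos; nra]). nra. }
    assert (HB2 : w * w <= k * (q * q * B)).
    { unfold B. apply (Rmult_le_reg_r q); auto.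
      replace (k * (q * q * (w * r / q)) * q) with (k * w * r * q * q) by (field; apply Rgt_not_eq; lra).
      assert (w <= k * q) by nra.
      assert (w * w * q <= k * q * (w * q)) by (rewrite <- Rmult_assoc; apply Rmult_le_compat_r; [nra| apply Rmult_le_compat_r; lra]).
      assert (0 <= k * w * q * q) by (repeat apply Rmult_le_pos; lra).
      assert (0 <= (k * w * q * q) * (r - 1)) by (apply Rmult_le_pos; lra).
      nra. }
    assert (HAp : 0 <= A) by (unfold A; apply Rmult_le_pos; [lra|apply Rlt_le, Rinv_0_lt_compat; lra]).
    assert (HBp : 0 <= B) by (unfold B; apply Rmult_le_pos; [nra|apply Rlt_le, Rinv_0_lt_compat; lra]).
    assert (Hkey : q * q - s * s <= q * q * (C * (2 + k) * (A + B))).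
    { assert (C * (s * r + s * w * r + w * w) <= C * (q*q*A + q*q*B + k*(q*q*B))).
      { apply Rmult_le_compat_l; lra. }
      assert (q*q*A + q*q*B + k*(q*q*B) <= q*q*((2+k)*(A+B))) by nra.
      nra. }
    assert (s * s / (q * q) = 1 - (q*q - s*s)/(q*q)) by (field; apply Rgt_not_eq; lra).
    assert ((q*q - s*s)/(q*q) <= C * (2 + k) * (A + B)).
    { apply (Rmult_le_reg_r (q*q)); auto.
      replace ((q*q - s*s)/(q*q) * (q*q)) with (q*q - s*s) by (field; apply Rgt_not_eq; lra). nra. }
    lra.
Qed.

Theorem theorem7 :
  forall C c : R, 0 < C -> 0 < c ->
  exists C' : R, 0 < C' /\
  exists L0 : nat,
  forall L T L' : nat,
    (L0 <= L)%nat ->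
    INR T <= c * INR L ->
    (0 < L')%nat ->
    alg3_length_bound C L T L' ->
    rate L L' >= 1 - C' * (sqrt (ln (INR L) / INR L)
                           + sqrt (noise_rate T L' * ln (INR L))).
Proof.
  intros C c HC Hc.
  pose proof (sqrt_pos c) as Hk.
  exists (C * (2 + sqrt c)). split; [nra|].
  exists 3%nat. intros L T L' HL HT HL' Hb.
  unfold alg3_length_bound, rate, noise_rate in *.
  assert (Hl : 3 <= INR L) by (replace 3 with (INR 3) by (simpl; lra); apply le_INR; lia).
  assert (Hp : 0 < INR L') by (apply lt_0_INR; lia).
  assert (Ht : 0 <= INR T) by apply pos_INR.
  assert (Hg : 1 <= ln (INR L)).
  { rewrite <- (ln_exp 1). pose proof exp_le_3.
    destruct (Rle_lt_or_eq_dec (exp 1) (INR L)) as [He|He]; [lra| |].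
    - apply Rlt_le, ln_increasing; [apply exp_pos|exact He].
    - rewrite He; lra. }
  set (l := INR L) in *. set (t := INR T) in *. set (p := INR L') in *.
  set (g := ln l) in *.
  set (s := sqrt l). set (q := sqrt p). set (r := sqrt g). set (w := sqrt t).
  assert (El : l = s * s) by (unfold s; rewrite sqrt_sqrt; lra).
  assert (Ep : p = q * q) by (unfold q; rewrite sqrt_sqrt; lra).
  assert (Eg : g = r * r) by (unfold r; rewrite sqrt_sqrt; lra).
  assert (Et : t = w * w) by (unfold w; rewrite sqrt_sqrt; lra).
  assert (Hs : 0 < s) by (apply sqrt_lt_R0; lra).
  assert (Hq : 0 < q) by (apply sqrt_lt_R0; lra).
  assert (Hr : 1 <= r) by (unfold r; rewrite <- sqrt_1; apply sqrt_le_1_alt; lra).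
  assert (Hw : 0 <= w) by apply sqrt_pos.
  assert (E1 : sqrt (g / l) = r / s).
  { unfold r, s. rewrite sqrt_div_alt by lra. reflexivity. }
  assert (E2 : sqrt (t / p * g) = w * r / q).
  { unfold w, r, q. rewrite sqrt_mult_alt.
    - rewrite sqrt_div_alt by lra. field. apply Rgt_not_eq, sqrt_lt_R0; lra.
    - apply Rmult_le_pos; [lra|apply Rlt_le, Rinv_0_lt_compat; lra]. }
  assert (Ex : sqrt (l * (t + 1) * g) <= s * r + s * w * r).
  { replace (l * (t + 1) * g) with (l * g + l * t * g) by ring.
    eapply Rle_trans; [apply sqrt_add_le; apply Rmult_le_pos; nra|].
    rewrite !sqrt_mult_alt by nra. fold s r w. lra. }
  assert (Hws : w <= sqrt c * s).
  { unfold w, s. rewrite <- sqrt_mult_alt by lra. apply sqrt_le_1_alt. lra. }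
  rewrite E1, E2, El, Ep.
  apply core; try lra.
  rewrite <- El, <- Ep.
  assert (C * sqrt (l * (t + 1) * g) <= C * (s * r + s * w * r)) by (apply Rmult_le_compat_l; lra).
  nra.
Qed.
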